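(* Let $\mathcal{M}$ be an episodic MDP with rewards in $[0,1]$, known transitions, and expert policy $\pi^{\operatorname{E}}$. Let $\widetilde d_h:\mathcal{S}\times\mathcal{A}\to\mathbb{R}$, $h\in[H]$, satisfy $\sum_{h=1}^H\|\widetilde d_h-d_h^{\pi^{\operatorname{E}}}\|_1\le\varepsilon_{\operatorname{EST}}$, and let $\bar\pi$ satisfy $\sum_{h=1}^H\|d_h^{\bar\pi}-\widetilde d_h\|_1\le\min_{\pi\in\Pi}\sum_{h=1}^H\|d_h^\pi-\widetilde d_h\|_1+\varepsilon_{\mathrm{opt}}$. Then $V^{\pi^{\operatorname{E}}}-V^{\bar\pi}\le\varepsilon_{\mathrm{opt}}+2\varepsilon_{\operatorname{EST}}$.
   Context: Episodic MDP $(\mathcal{S},\mathcal{A},P,r,H,\rho)$ with finite $\mathcal{S},\mathcal{A}$, rewards $r_h:\mathcal{S}\times\mathcal{A}\to[0,1]$. $\Pi$ is the set of non-stationary policies $\pi_h:\mathcal{S}\to\Delta(\mathcal{A})$; $d_h^\pi(s,a)$ is the probability that $(s_h,a_h)=(s,a)$ under $\pi$ in $\mathcal{M}$; $V^\pi=\sum_{h}\sum_{(s,a)}d_h^\pi(s,a)r_h(s,a)$; $\|\cdot\|_1$ is the $\ell_1$ norm over $\mathcal{S}\times\mathcal{A}$. *)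

(* Defs.v *)
From mathcomp Require Import all_boot all_order all_algebra.
Set Implicit Arguments. Unset Strict Implicit. Unset Printing Implicit Defensive.
Import Order.TTheory GRing.Theory Num.Theory.
Local Open Scope ring_scope.

(* Steps are indexed h = 0, ..., H-1 (paper: h = 1, ..., H).
   P h s a s' = P_h(s' | s, a); pi h s a = pi_h(a | s); rho s = initial prob. *)

Definition is_distr (R : numDomainType) (T : finType) (p : T -> R) : Prop :=
  (forall x, 0 <= p x) /\ \sum_(x : T) p x = 1.

Definition is_transition (R : numDomainType) (S A : finType) (H : nat)
  (P : nat -> S -> A -> S -> R) : Prop :=
  forall h, (h < H)%N -> forall s a, is_distr (P h s a).

(* Membership in Pi: non-stationary (possibly randomized) Markov policies. *)
Definition is_policy (R : numDomainType) (S A : finType) (H : nat)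
  (pi : nat -> S -> A -> R) : Prop :=
  forall h, (h < H)%N -> forall s, is_distr (pi h s).

Fixpoint state_dist (R : numDomainType) (S A : finType) (rho : S -> R)
  (P : nat -> S -> A -> S -> R) (pi : nat -> S -> A -> R) (h : nat) : S -> R :=
  match h with
  | 0 => rho
  | h'.+1 => fun s' => \sum_(s : S) \sum_(a : A)
                state_dist rho P pi h' s * pi h' s a * P h' s a s'
  end.

(* occupancy measure d_h^pi(s,a) = Pr(s_h = s, a_h = a) *)
Definition occ (R : numDomainType) (S A : finType) (rho : S -> R)
  (P : nat -> S -> A -> S -> R) (pi : nat -> S -> A -> R) (h : nat)
  (s : S) (a : A) : R :=
  state_dist rho P pi h s * pi h s a.

Definition value (R : numDomainType) (S A : finType) (H : nat) (rho : S -> R)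
  (P : nat -> S -> A -> S -> R) (r : nat -> S -> A -> R)
  (pi : nat -> S -> A -> R) : R :=
  \sum_(h < H) \sum_(s : S) \sum_(a : A) occ rho P pi h s a * r h s a.

Definition l1dist (R : numDomainType) (S A : finType) (d d' : S -> A -> R) : R :=
  \sum_(s : S) \sum_(a : A) `|d s a - d' s a|.

Definition occ_dist (R : numDomainType) (S A : finType) (H : nat) (rho : S -> R)
  (P : nat -> S -> A -> S -> R) (pi : nat -> S -> A -> R)
  (dt : nat -> S -> A -> R) : R :=
  \sum_(h < H) l1dist (occ rho P pi h) (dt h).

(* Main.v *)
Require Import Defs.
From mathcomp Require Import all_boot all_order all_algebra.
From mathcomp Require Import lra.
Import Order.TTheory GRing.Theory Num.Theory.
Local Open Scope ring_scope.

Theorem lemma1 (R : realFieldType) (S A : finType) (H : nat)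
  (rho : S -> R) (P : nat -> S -> A -> S -> R) (r : nat -> S -> A -> R)
  (piE pibar : nat -> S -> A -> R) (dt : nat -> S -> A -> R)
  (eps_est eps_opt : R) :
  is_distr rho ->
  is_transition H P ->
  (forall h, (h < H)%N -> forall s a, 0 <= r h s a <= 1) ->
  is_policy H piE ->
  is_policy H pibar ->
  \sum_(h < H) l1dist (dt h) (occ rho P piE h) <= eps_est ->
  (forall pi, is_policy H pi ->
     occ_dist H rho P pibar dt <= occ_dist H rho P pi dt + eps_opt) ->
  value H rho P r piE - value H rho P r pibar <= eps_opt + 2 * eps_est.
Proof.
move=> _ _ hr hE _ hest hopt.
have h1 := hopt _ hE.
have eqE : occ_dist H rho P piE dt = \sum_(h < H) l1dist (dt h) (occ rho P piE h).
  apply: eq_bigr => h _; apply: eq_bigr => s _; apply: eq_bigr => a _.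
  by rewrite distrC.
have key : value H rho P r piE - value H rho P r pibar <=
   \sum_(h < H) l1dist (dt h) (occ rho P piE h) + occ_dist H rho P pibar dt.
  rewrite /value /occ_dist /l1dist -sumrB -big_split /=.
  apply: ler_sum => h _; rewrite -sumrB -big_split /=.
  apply: ler_sum => s _; rewrite -sumrB -big_split /=.
  apply: ler_sum => a _.
  have /andP[r0 r1] := hr h (ltn_ord h) s a.
  set x := occ rho P piE h s a; set y := occ rho P pibar h s a; set d := dt h s a.
  rewrite -mulrBl.
  apply: (le_trans (y := `|x - y|)).
    apply: (le_trans (y := `|x - y| * r h s a)).
      by rewrite ler_wpM2r // real_ler_norm // num_real.
    by rewrite ler_piMr.
  rewrite (distrC d x) (distrC y d).
  have -> : x - y = (x - d) + (d - y) by rewrite addrA subrK.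
  exact: ler_normD.
rewrite eqE in h1.
apply: (le_trans key); lra.
Qed.
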